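(* For every $z_j\in Z_\theta$ and every $t=0,1,\dots,T-2$, $$\bar\psi_t(\theta,z_j)\le\gamma_t\theta+\theta\sum_{n=1}^{T-1-t}\alpha^n\gamma_{t+n}\prod_{m=0}^{n-1}F_{t+m}\big(z_j+(m+1)\theta-s_{t+m+1}\big).$$
   Context: Model. Fix an integer horizon $T\ge 2$, a discount factor $\alpha\in(0,1]$, and for $t=0,\dots,T-1$: unit ordering costs $c_t\in\mathbb R$, a salvage coefficient $c_T\in\mathbb R$, setup costs $K_t\ge 0$, functions $G_t:\mathbb R\to\mathbb R$, and independent nonnegative random demands $D_0,\dots,D_{T-1}$ with right-continuous distribution functions $F_t$ and finite means; all expectations appearing are assumed finite. Put $C_t(y)=(c_t-\alpha c_{t+1})y+G_t(y)+\alpha c_{t+1}E[D_t]$. Standing assumptions: (i) each $C_t$ is convex with $C_t(y)\to+\infty$ as $|y|\to\infty$; (ii) $K_t\ge \alpha K_{t+1}$ for $t=0,\dots,T-2$; (iii) there are constants $\gamma_t\ge 0$ with $|C_t(x)-C_t(y)|\le\gamma_t|x-y|$ for all $x,y$. Grid construction. Fix $\theta>0$, $z_m=m\theta$, $Z_\theta=\{z_m:m\in\mathbb Z\}$, $f_t(n)=F_t(z_{n+1})-F_t(z_n)$ ($n\ge -1$). $C^m_t=\min\{y: C_t(y)=\min_x C_t(x)\}$; with $z_{n_0}<C^m_t\le z_{n_0+1}$, $S^U_t=\min\{z_m\in Z_\theta: z_m\ge C^m_t,\ C_t(z_m)>C_t(z_{n_0})+K_t\}$. $s_{T-1}$ is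 a point with $s_{T-1}\le C^m_{T-1}$, $C_{T-1}(s_{T-1})=C_{T-1}(C^m_{T-1})+K_{T-1}$; $\bar I_{T-1}=s_{T-1}$. For $t=T-2,\dots,0$: $I_t=\max\{z_m\in Z_\theta: z_m<\min(\bar I_{t+1}-\theta,C^m_t)\}$, $\bar I_t=\max\{z_m\in Z_\theta: z_m\le I_t,\ C_t(z_m)>C_t(I_t)+K_t\}+\theta$. $H_{T-1}=C_{T-1}$, $S_{T-1}=C^m_{T-1}$; $V_t(y)=H_t(S_t)+K_t$ for $y<s_t$, $V_t(y)=H_t(y)$ for $y\ge s_t$. For $t=T-2,\dots,0$: $H_t(y)=C_t(y)+\alpha\sum_{n=-1}^\infty V_{t+1}(y-z_n)f_t(n)$; $S_t=\max\{z_m\in Z_\theta: I_t\le z_m\le S^U_t,\ H_t(z_m)=\min\{H_t(z_n):z_n\in Z_\theta, I_t\le z_n\le S^U_t\}\}$; $s_t=S_t$ if $K_t=0$, else $s_t=\min\{z_m\in Z_\theta:\bar I_t\le z_m\le S_t,\ H_t(z_m)\le H_t(S_t)+K_t\}$. Upper estimate functions. $\bar\psi_{T-1}(x,y)=\gamma_{T-1}x$; $\bar\varphi_{T-1}(x,y)=0$ if $y<s_{T-1}$ and $=\gamma_{T-1}x$ if $y\ge s_{T-1}$. For $t=0,\dots,T-2$, with $n$ the integer such that $z_{n-1}\le y-s_{t+1}<z_n$: $\bar\psi_t(x,y)=\gamma_tx$ if $y<s_{t+1}-\theta$, else $\bar\psi_t(x,y)=\gamma_tx+\alpha\sum_{m=-1}^{n-1}\bar\varphi_{t+1}(x,y-z_m)f_t(m)$;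 $\bar\varphi_t(x,y)=0$ if $y<s_t$, $=\bar\psi_t(y-s_t+\theta,y)$ if $y\ge s_t$ and $y-x<s_t$, $=\bar\psi_t(x,y)$ if $y\ge s_t$ and $y-x\ge s_t$. *)

(* Defs.v *)
From Stdlib Require Import Reals ZArith ClassicalEpsilon.
From Coquelicot Require Import Coquelicot.
Open Scope R_scope.

(** Generic selection operators (Hilbert choice).  When the described
    minimiser / maximiser exists (as it does under the paper's assumptions),
    these return it. *)
Definition zmin (P : Z -> Prop) : Z :=
  epsilon (inhabits 0%Z) (fun m => P m /\ forall m', P m' -> (m <= m')%Z).
Definition zmax (P : Z -> Prop) : Z :=
  epsilon (inhabits 0%Z) (fun m => P m /\ forall m', P m' -> (m' <= m)%Z).
Definition rmin (P : R -> Prop) : R :=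
  epsilon (inhabits 0) (fun y => P y /\ forall y', P y' -> y <= y').

Fixpoint sum_from1 (N : nat) (g : nat -> R) : R :=
  match N with O => 0 | S N' => sum_from1 N' g + g (S N') end.
Fixpoint prod_upto (n : nat) (g : nat -> R) : R :=
  match n with O => 1 | S n' => prod_upto n' g * g n' end.

Section Construction.
Variables (T : nat) (alpha theta : R) (c K : nat -> R) (G F : nat -> R -> R)
          (mu : nat -> R) (gamma : nat -> R).
(* mu t stands for E[D_t]. *)

Definition zg (m : Z) : R := IZR m * theta.

Definition Cfun (t : nat) (y : R) : R :=
  (c t - alpha * c (S t)) * y + G t y + alpha * c (S t) * mu t.

Definition ftab (t : nat) (n : Z) : R := F t (zg (n + 1)) - F t (zg n).

Definition Cm (t : nat) : R := rmin (fun y => forall x, Cfun t y <= Cfun t x).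

Definition n0 (t : nat) : Z :=
  epsilon (inhabits 0%Z) (fun m => zg m < Cm t <= zg (m + 1)).

Definition SU (t : nat) : R :=
  zg (zmin (fun m => Cm t <= zg m /\ Cfun t (zg (n0 t)) + K t < Cfun t (zg m))).

Definition sLast : R :=
  epsilon (inhabits 0) (fun s => s <= Cm (T - 1) /\
            Cfun (T - 1) s = Cfun (T - 1) (Cm (T - 1)) + K (T - 1)).

Definition I_of (t : nat) (Ib1 : R) : R :=
  zg (zmax (fun m => zg m < Rmin (Ib1 - theta) (Cm t))).
Definition Ibar_of (t : nat) (It : R) : R :=
  zg (zmax (fun m => zg m <= It /\ Cfun t It + K t < Cfun t (zg m))) + theta.

Fixpoint Ibar_k (k : nat) : R :=
  match k with
  | O => sLast
  | S k' => let t := (T - 1 - k)%nat in Ibar_of t (I_of t (Ibar_k k'))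
  end.

Definition Vfun (H : R -> R) (Sv sv Kn : R) (y : R) : R :=
  if Rlt_dec y sv then H Sv + Kn else H y.
Definition Vof (p : (R -> R) * R * R) (Kn : R) : R -> R :=
  let '(H1, S1, s1) := p in Vfun H1 S1 s1 Kn.

(** i-th term (i = n+1, n >= -1) of sum_{n>=-1} V(y - z_n) f_t(n) *)
Definition Hterm (t : nat) (V : R -> R) (y : R) (i : nat) : R :=
  V (y - zg (Z.of_nat i - 1)) * ftab t (Z.of_nat i - 1).

(** (H_t, S_t, s_t) for t = T-1-k *)
Fixpoint stage (k : nat) : (R -> R) * R * R :=
  match k with
  | O => (Cfun (T - 1), Cm (T - 1), sLast)
  | S k' =>
      let t := (T - 1 - k)%nat in
      let V := Vof (stage k') (K (S t)) in
      let H := fun y => Cfun t y + alpha * Series (Hterm t V y) in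
      let lo := I_of t (Ibar_k k') in
      let hi := SU t in
      let St := zg (zmax (fun m => (lo <= zg m <= hi) /\
                    forall n, lo <= zg n <= hi -> H (zg m) <= H (zg n))) in
      let st := if Req_EM_T (K t) 0 then St
                else zg (zmin (fun m => (Ibar_k k <= zg m <= St) /\
                                        H (zg m) <= H St + K t)) in
      (H, St, st)
  end.

Definition s_ (t : nat) : R := snd (stage (T - 1 - t)).

Definition H_expectations_finite : Prop :=
  forall k, (k < T - 1)%nat -> forall y,
    ex_series (Hterm (T - 2 - k) (Vof (stage k) (K (T - 1 - k))) y).

Definition nidx (y sn : R) : Z :=
  epsilon (inhabits 0%Z) (fun n => zg (n - 1) <= y - sn < zg n).

Fixpoint psiphi (k : nat) : (R -> R -> R) * (R -> R -> R) :=
  match k with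
  | O => (fun x _ => gamma (T - 1) * x,
          fun x y => if Rlt_dec y (s_ (T - 1)) then 0 else gamma (T - 1) * x)
  | S k' =>
      let phi1 := snd (psiphi k') in
      let t := (T - 1 - k)%nat in
      let psi := fun x y =>
        if Rlt_dec y (s_ (S t) - theta) then gamma t * x
        else gamma t * x + alpha *
          sum_f_R0 (fun i => phi1 x (y - zg (Z.of_nat i - 1)) * ftab t (Z.of_nat i - 1))
                   (Z.to_nat (nidx y (s_ (S t)))) in
      let phi := fun x y =>
        if Rlt_dec y (s_ t) then 0
        else if Rlt_dec (y - x) (s_ t) then psi (y - s_ t + theta) y
        else psi x y in
      (psi, phi)
  end.

Definition psibar (t : nat) : R -> R -> R := fst (psiphi (T - 1 - t)).
Definition phibar (t : nat) : R -> R -> R := snd (psiphi (T - 1 - t)).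

End Construction.

(* Main.v *)
Require Import Defs.
From Stdlib Require Import Reals ZArith Lia Lra ClassicalEpsilon.
From Coquelicot Require Import Coquelicot.
Open Scope R_scope.

Lemma sum_from1_ext N g h : (forall n, (1 <= n <= N)%nat -> g n = h n) ->
  sum_from1 N g = sum_from1 N h.
Proof. induction N; intros H; simpl; auto. rewrite IHN, H; [reflexivity|lia|intros; apply H; lia]. Qed.

Lemma sum_from1_mono N g h : (forall n, (1 <= n <= N)%nat -> g n <= h n) ->
  sum_from1 N g <= sum_from1 N h.
Proof. induction N; intros H; simpl. lra. apply Rplus_le_compat; [apply IHN; intros; apply H; lia| apply H; lia]. Qed.

Lemma sum_from1_nonneg N g : (forall n, (1 <= n <= N)%nat -> 0 <= g n) -> 0 <= sum_from1 N g.
Proof. induction N; intros H; simpl. lra. assert (0 <= g (S N)) by (apply H; lia).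
  assert (0 <= sum_from1 N g) by (apply IHN; intros; apply H; lia). lra. Qed.

Lemma sum_from1_shift N g : sum_from1 (S N) g = g 1%nat + sum_from1 N (fun n => g (S n)).
Proof. induction N; simpl. ring. simpl in IHN. rewrite IHN. ring. Qed.

Lemma sum_from1_scal N a g : sum_from1 N (fun n => a * g n) = a * sum_from1 N g.
Proof. induction N; simpl. ring. rewrite IHN. ring. Qed.

Lemma prod_upto_ext n g h : (forall m, (m < n)%nat -> g m = h m) -> prod_upto n g = prod_upto n h.
Proof. induction n; intros H; simpl; auto. rewrite IHn, H; [reflexivity|lia|intros; apply H; lia]. Qed.

Lemma prod_upto_nonneg n g : (forall m, (m < n)%nat -> 0 <= g m) -> 0 <= prod_upto n g.
Proof. induction n; intros H; simpl. lra. apply Rmult_le_pos; [apply IHn; intros; apply H; lia| apply H; lia]. Qed.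

Lemma prod_upto_mono n g h : (forall m, (m < n)%nat -> 0 <= g m <= h m) -> prod_upto n g <= prod_upto n h.
Proof. induction n; intros H; simpl. lra.
  apply Rmult_le_compat. apply prod_upto_nonneg; intros; apply H; lia. apply H; lia.
  apply IHn; intros; apply H; lia. apply H; lia. Qed.

Lemma prod_upto_shift n g : prod_upto (S n) g = g 0%nat * prod_upto n (fun m => g (S m)).
Proof. induction n; simpl. ring. simpl in IHn. rewrite IHn. ring. Qed.

Lemma zg_sub theta a b : zg theta a - zg theta b = zg theta (a - b).
Proof. unfold zg. rewrite minus_IZR. ring. Qed.

Lemma zg_lt theta a b : 0 < theta -> zg theta a < zg theta b -> (a < b)%Z.
Proof. unfold zg; intros Ht H. apply lt_IZR. apply Rmult_lt_reg_r with theta; auto. Qed.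

Lemma nidx_spec theta y sn : 0 < theta ->
  zg theta (nidx theta y sn - 1) <= y - sn < zg theta (nidx theta y sn).
Proof.
  intros Ht. unfold nidx. apply epsilon_spec.
  exists (up ((y - sn) / theta)). destruct (archimed ((y - sn)/theta)) as [H1 H2].
  unfold zg. rewrite minus_IZR. split.
  - apply Rle_trans with (((y - sn)/theta) * theta).
    apply Rmult_le_compat_r; lra. right; field; lra.
  - apply Rle_lt_trans with (((y - sn)/theta) * theta). right; field; lra.
    apply Rmult_lt_compat_r; lra.
Qed.

Lemma telesc theta (Ft : R -> R) M :
  sum_f_R0 (fun i => ftab theta (fun _ => Ft) 0 (Z.of_nat i - 1)) M =
  Ft (zg theta (Z.of_nat M)) - Ft (zg theta (-1)).
Proof.
  induction M.
  - simpl. unfold ftab. reflexivity.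
  - rewrite tech5, IHM. unfold ftab.
    replace (Z.of_nat (S M) - 1 + 1)%Z with (Z.of_nat (S M)) by lia.
    replace (Z.of_nat (S M) - 1)%Z with (Z.of_nat M) by lia. ring.
Qed.
Theorem lemma4p9
  (T : nat) (alpha theta : R) (c K : nat -> R) (G F : nat -> R -> R)
  (mu gamma : nat -> R)
  (HT : (2 <= T)%nat)
  (Halpha : 0 < alpha <= 1)
  (Htheta : 0 < theta)
  (HK : forall t, (t < T)%nat -> 0 <= K t)
  (* F_t is the distribution function of a nonnegative demand D_t *)
  (HFmono : forall t x y, (t < T)%nat -> x <= y -> F t x <= F t y)
  (HFrc : forall t x, (t < T)%nat -> filterlim (F t) (at_right x) (locally (F t x)))
  (HFneg : forall t x, (t < T)%nat -> x < 0 -> F t x = 0)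
  (HFinf : forall t, (t < T)%nat -> is_lim (F t) p_infty 1)
  (* mu t = E[D_t] = int_0^oo (1 - F_t), finite *)
  (Hmu : forall t, (t < T)%nat ->
     is_RInt_gen (fun x => 1 - F t x) (at_point 0) (Rbar_locally p_infty) (mu t))
  (* all expectations appearing are finite *)
  (Hfin : H_expectations_finite T alpha theta c K G F mu)
  (* (i) convexity and coercivity of C_t *)
  (Hconv : forall t x y l, (t < T)%nat -> 0 <= l <= 1 ->
     Cfun alpha c G mu t (l * x + (1 - l) * y)
       <= l * Cfun alpha c G mu t x + (1 - l) * Cfun alpha c G mu t y)
  (Hcoer : forall t M, (t < T)%nat -> exists N, forall y, N < Rabs y ->
     M < Cfun alpha c G mu t y)
  (* (ii) *)
  (HKdec : forall t, (t <= T - 2)%nat -> alpha * K (S t) <= K t)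
  (* (iii) *)
  (Hgamma : forall t, (t < T)%nat -> 0 <= gamma t /\ forall x y,
     Rabs (Cfun alpha c G mu t x - Cfun alpha c G mu t y) <= gamma t * Rabs (x - y)) :
  forall (j : Z) (t : nat), (t <= T - 2)%nat ->
    psibar T alpha theta c K G F mu gamma t theta (zg theta j)
    <= gamma t * theta + theta *
       sum_from1 (T - 1 - t) (fun n => alpha ^ n * gamma (t + n)%nat *
         prod_upto n (fun m => F (t + m)%nat
           (zg theta j + INR (m + 1) * theta - s_ T alpha theta c K G F mu (t + m + 1)))).
Proof.
  intros j0 t0 Ht0.
  set (s := s_ T alpha theta c K G F mu).
  set (psb := psibar T alpha theta c K G F mu gamma).
  set (phb := phibar T alpha theta c K G F mu gamma).
  set (B := fun t y => gamma t * theta + theta *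
       sum_from1 (T - 1 - t) (fun n => alpha ^ n * gamma (t + n)%nat *
         prod_upto n (fun m => F (t + m)%nat (y + INR (m + 1) * theta - s (t + m + 1)%nat)))).
  change (psb t0 theta (zg theta j0) <= B t0 (zg theta j0)).
  assert (Fnn : forall t x, (t < T)%nat -> 0 <= F t x).
  { intros t x Ht. destruct (Rlt_dec x 0). rewrite HFneg; auto; lra.
    rewrite <- (HFneg t (-1)) by (auto; lra). apply HFmono; auto; lra. }
  assert (Hpsi : forall t x y, (t <= T - 2)%nat -> psb t x y =
     if Rlt_dec y (s (S t) - theta) then gamma t * x else gamma t * x + alpha *
       sum_f_R0 (fun i => phb (S t) x (y - zg theta (Z.of_nat i - 1)) * ftab theta F t (Z.of_nat i - 1))
         (Z.to_nat (nidx theta y (s (S t))))).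
  { intros t x y Ht. unfold psb, phb, psibar, phibar.
    replace (T - 1 - t)%nat with (S (T - 1 - S t)) by lia. cbn [psiphi fst snd].
    replace (T - 1 - S (T - 1 - S t))%nat with t by lia. reflexivity. }
  assert (Hphi : forall t x y, (t <= T - 2)%nat -> phb t x y =
     if Rlt_dec y (s t) then 0 else if Rlt_dec (y - x) (s t) then psb t (y - s t + theta) y
     else psb t x y).
  { intros t x y Ht. unfold psb, phb, psibar, phibar.
    replace (T - 1 - t)%nat with (S (T - 1 - S t)) by lia. cbn [psiphi fst snd].
    replace (T - 1 - S (T - 1 - S t))%nat with t by lia. reflexivity. }
  assert (Hphi0 : forall x y, phb (T - 1)%nat x y =
     if Rlt_dec y (s (T - 1)%nat) then 0 else gamma (T - 1)%nat * x).
  { intros x y. unfold phb, phibar. rewrite Nat.sub_diag. reflexivity. }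
  assert (Hgrid : forall t, (t <= T - 2)%nat -> exists m, s t = zg theta m).
  { intros t Ht. unfold s, s_. replace (T - 1 - t)%nat with (S (T - 1 - S t)) by lia.
    cbn [stage snd]. destruct (Req_EM_T _ _); eexists; reflexivity. }
  assert (Bnn : forall t y, (t <= T - 1)%nat -> 0 <= B t y).
  { intros t y Ht. unfold B. apply Rplus_le_le_0_compat.
    apply Rmult_le_pos; [apply Hgamma; lia| lra].
    apply Rmult_le_pos; [lra|]. apply sum_from1_nonneg. intros n Hn.
    apply Rmult_le_pos; [apply Rmult_le_pos; [apply pow_le; lra| apply Hgamma; lia]|].
    apply prod_upto_nonneg. intros; apply Fnn; lia. }
  assert (Bmono : forall t y y', (t <= T - 1)%nat -> y <= y' -> B t y <= B t y').
  { intros t y y' Ht Hy. unfold B. apply Rplus_le_compat_l.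
    apply Rmult_le_compat_l; [lra|]. apply sum_from1_mono. intros n Hn.
    apply Rmult_le_compat_l; [apply Rmult_le_pos; [apply pow_le; lra| apply Hgamma; lia]|].
    apply prod_upto_mono. intros m Hm. split. apply Fnn; lia. apply HFmono. lia. lra. }
  assert (Bstep : forall t y, (t <= T - 2)%nat ->
     B t y = gamma t * theta + alpha * F t (y + theta - s (S t)) * B (S t) (y + theta)).
  { intros t y Ht. unfold B.
    replace (T - 1 - t)%nat with (S (T - 1 - S t)) by lia.
    rewrite sum_from1_shift.
    rewrite (sum_from1_ext _ (fun n => alpha ^ S n * gamma (t + S n)%nat * prod_upto (S n)
       (fun m => F (t + m)%nat (y + INR (m + 1) * theta - s (t + m + 1)%nat)))
       (fun n => (alpha * F t (y + theta - s (S t))) * (alpha ^ n * gamma (S t + n)%nat *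
         prod_upto n (fun m => F (S t + m)%nat (y + theta + INR (m + 1) * theta - s (S t + m + 1)%nat))))).
    2:{ intros n Hn. rewrite prod_upto_shift.
        rewrite (prod_upto_ext _ (fun m => F (t + S m)%nat (y + INR (S m + 1) * theta - s (t + S m + 1)%nat))
           (fun m => F (S t + m)%nat (y + theta + INR (m + 1) * theta - s (S t + m + 1)%nat))).
        2:{ intros m Hm. replace (t + S m)%nat with (S t + m)%nat by lia.
            replace (t + S m + 1)%nat with (S t + m + 1)%nat by lia.
            replace (S m + 1)%nat with (S (m + 1)) by lia. rewrite S_INR.
            f_equal. ring. }
        rewrite Nat.add_0_r. replace (t + 0 + 1)%nat with (S t) by lia.
        replace (t + S n)%nat with (S t + n)%nat by lia. simpl INR. simpl pow.
        replace (y + 1 * theta - s (S t)) with (y + theta - s (S t)) by ring.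
        replace (t + 1)%nat with (S t) by lia. replace (y + 1 * theta - s (S t)) with (y + theta - s (S t)) by ring. ring. }
    rewrite sum_from1_scal. simpl prod_upto. rewrite Nat.add_0_r.
    replace (t + 0 + 1)%nat with (S t) by lia. replace (t + 1)%nat with (S t) by lia.
    simpl INR. replace (y + 1 * theta - s (S t)) with (y + theta - s (S t)) by ring. ring. }
  assert (ftnn : forall t n, (t < T)%nat -> 0 <= ftab theta F t n).
  { intros t n Ht. unfold ftab. assert (F t (zg theta n) <= F t (zg theta (n + 1))); [|lra].
    apply HFmono; auto. unfold zg; rewrite plus_IZR; nra. }
  assert (Pstep : forall t, (t <= T - 2)%nat ->
    (forall j, phb (S t) theta (zg theta j) <= B (S t) (zg theta j)) ->
    forall j, psb t theta (zg theta j) <= B t (zg theta j)).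
  { intros t Ht IH j. rewrite Hpsi by auto. rewrite Bstep by auto.
    set (y := zg theta j). set (Bp := B (S t) (y + theta)).
    assert (HBp : 0 <= Bp) by (apply Bnn; lia).
    assert (HF0 : 0 <= F t (y + theta - s (S t))) by (apply Fnn; lia).
    destruct (Rlt_dec y (s (S t) - theta)).
    { assert (0 <= alpha * F t (y + theta - s (S t)) * Bp).
      apply Rmult_le_pos; auto. apply Rmult_le_pos; lra. lra. }
    apply Rplus_le_compat_l.
    set (N := nidx theta y (s (S t))).
    destruct (nidx_spec theta y (s (S t)) Htheta) as [N1 N2]. fold N in N1, N2.
    assert (HN : (-1 < N)%Z).
    { apply (zg_lt theta); auto. unfold zg at 1. simpl IZR. lra. }
    apply Rle_trans with (alpha * sum_f_R0 (fun i => ftab theta F t (Z.of_nat i - 1) * Bp) (Z.to_nat N)).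
    { apply Rmult_le_compat_l; [lra|]. apply sum_Rle. intros i Hi.
      rewrite Rmult_comm. apply Rmult_le_compat_l. apply ftnn; lia.
      unfold y. rewrite zg_sub. apply Rle_trans with (B (S t) (zg theta (j - (Z.of_nat i - 1)))).
      apply IH. apply Bmono. lia. rewrite <- zg_sub. fold y.
      unfold zg. rewrite minus_IZR, <- INR_IZR_INZ. pose proof (pos_INR i). nra. }
    rewrite <- scal_sum.
    change (fun i => ftab theta F t (Z.of_nat i - 1)) with
       (fun i => ftab theta (fun _ => F t) 0 (Z.of_nat i - 1)).
    rewrite telesc. rewrite Z2Nat.id by lia.
    rewrite (HFneg t (zg theta (-1))) by (try lia; unfold zg; simpl IZR; lra).
    assert (F t (zg theta N) <= F t (y + theta - s (S t))).
    { apply HFmono. lia. replace (zg theta N) with (zg theta (N - 1) + theta)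
        by (unfold zg; rewrite minus_IZR; ring). lra. }
    assert (0 <= F t (zg theta N)) by (apply Fnn; lia).
    rewrite Rminus_0_r.
    replace (alpha * F t (y + theta - s (S t)) * Bp) with (alpha * (Bp * F t (y + theta - s (S t)))) by ring.
    apply Rmult_le_compat_l; [lra|]. apply Rmult_le_compat_l; auto. }
  assert (Qstep : forall t, (t <= T - 2)%nat ->
    (forall j, psb t theta (zg theta j) <= B t (zg theta j)) ->
    forall j, phb t theta (zg theta j) <= B t (zg theta j)).
  { intros t Ht IH j. rewrite Hphi by auto.
    destruct (Rlt_dec (zg theta j) (s t)). apply Bnn; lia.
    destruct (Rlt_dec (zg theta j - theta) (s t)); [|apply IH].
    destruct (Hgrid t Ht) as [m Hm]. rewrite Hm in *.
    assert (j = m).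
    { unfold zg in n, r.
      assert (0 <= IZR j - IZR m) by nra. assert (IZR j - IZR m < 1) by nra.
      rewrite <- minus_IZR in *. apply le_IZR in H. apply lt_IZR in H0. lia. }
    subst m. replace (zg theta j - zg theta j + theta) with theta by ring. apply IH. }
  assert (Q0 : forall j, phb (T - 1)%nat theta (zg theta j) <= B (T - 1)%nat (zg theta j)).
  { intros j. rewrite Hphi0. unfold B. rewrite Nat.sub_diag. simpl sum_from1.
    destruct (Rlt_dec _ _). pose proof (proj1 (Hgamma (T-1)%nat ltac:(lia))). nra. lra. }
  assert (Qall : forall k, (k <= T - 1)%nat -> forall j,
     phb (T - 1 - k)%nat theta (zg theta j) <= B (T - 1 - k)%nat (zg theta j)).
  { induction k; intros Hk. rewrite Nat.sub_0_r. apply Q0.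
    apply Qstep. lia. apply Pstep. lia.
    replace (S (T - 1 - S k)) with (T - 1 - k)%nat by lia. apply IHk; lia. }
  apply Pstep; auto. replace (S t0) with (T - 1 - (T - 2 - t0))%nat by lia. apply Qall; lia.
Qed.
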